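(* Let $\tau$ be a topology on $\mathbb{R}$ such that $\tau_e\subset\tau$ and every nonempty $\tau$-open set has the Baire property and is non-meager (with respect to the Euclidean topology). Then every $\tau$-Świątkowski function $f\colon\mathbb{R}\to\mathbb{R}$ has the Baire property.
   Context: $\tau_e$ is the Euclidean topology on $\mathbb{R}$. For a topology $\tau$ on $\mathbb{R}$ and $f\colon\mathbb{R}\to\mathbb{R}$, $\mathrm{C}_\tau(f)$ is the set of points $x$ at which $f$ is continuous as a map from $(\mathbb{R},\tau)$ to $\mathbb{R}$ with the Euclidean topology. $f$ is a $\tau$-Świątkowski function if for all $a,b\in\mathbb{R}$ with $f(a)<f(b)$ there exists $x\in\mathrm{C}_\tau(f)$ lying strictly between $a$ and $b$ with $f(a)<f(x)<f(b)$. A function has the Baire property if preimages of open sets are of the form $O\triangle M$ with $O$ open and $M$ meager. *)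

(* Defs.v *)
From Stdlib Require Import Reals.
Open Scope R_scope.

Definition is_topology (tau : (R -> Prop) -> Prop) : Prop :=
  tau (fun _ => False) /\ tau (fun _ => True) /\
  (forall F : (R -> Prop) -> Prop, (forall U, F U -> tau U) ->
     tau (fun x => exists U, F U /\ U x)) /\
  (forall U V, tau U -> tau V -> tau (fun x => U x /\ V x)).

Definition eopen (U : R -> Prop) : Prop :=
  forall x, U x -> exists eps, 0 < eps /\ forall y, Rabs (y - x) < eps -> U y.

Definition finer_than_euclid (tau : (R -> Prop) -> Prop) : Prop :=
  forall U, eopen U -> tau U.

Definition nonempty (A : R -> Prop) : Prop := exists x, A x.

(* Nowhere dense (Euclidean): the closure has empty interior, i.e. every
   nonempty open set contains a nonempty open subset disjoint from A. *)
Definition nowhere_dense (A : R -> Prop) : Prop :=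
  forall U, eopen U -> nonempty U ->
    exists V, eopen V /\ nonempty V /\ (forall x, V x -> U x) /\
              (forall x, V x -> ~ A x).

Definition meager (A : R -> Prop) : Prop :=
  exists N : nat -> R -> Prop, (forall n, nowhere_dense (N n)) /\
    (forall x, A x -> exists n, N n x).

Definition baire_set (A : R -> Prop) : Prop :=
  exists O M, eopen O /\ meager M /\
    (forall x, A x <-> ((O x /\ ~ M x) \/ (M x /\ ~ O x))).

Definition baire_fun (f : R -> R) : Prop :=
  forall V, eopen V -> baire_set (fun x => V (f x)).

Definition tau_cont_at (tau : (R -> Prop) -> Prop) (f : R -> R) (x : R) : Prop :=
  forall eps, 0 < eps -> exists U, tau U /\ U x /\
    forall y, U y -> Rabs (f y - f x) < eps.

Definition tau_swiatkowski (tau : (R -> Prop) -> Prop) (f : R -> R) : Prop :=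
  forall a b, f a < f b -> exists x,
    tau_cont_at tau f x /\ Rmin a b < x < Rmax a b /\ f a < f x < f b.

(* Main.v *)
Require Import Defs.
From Stdlib Require Import Reals Lra ZArith Classical IndefiniteDescription.
From Stdlib Require Cantor.
Open Scope R_scope.

Lemma meager_sub (A B : R -> Prop) : (forall x, A x -> B x) -> meager B -> meager A.
Proof.
  intros H [N [HN HB]]. exists N; split; auto.
Qed.

Lemma meager_cunion (A : nat -> R -> Prop) : (forall n, meager (A n)) ->
  meager (fun x => exists n, A n x).
Proof.
  intros H.
  destruct (functional_choice (fun n (N : nat -> R -> Prop) =>
     (forall m, nowhere_dense (N m)) /\ forall x, A n x -> exists m, N m x) H)
    as [G HG].
  exists (fun k => let p := Cantor.of_nat k in G (fst p) (snd p)).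
  split.
  - intro k. simpl. apply (proj1 (HG _)).
  - intros x [n Hn]. destruct (proj2 (HG n) x Hn) as [m Hm].
    exists (Cantor.to_nat (n, m)). rewrite Cantor.cancel_of_to. exact Hm.
Qed.

Lemma meager_union2 (A B : R -> Prop) : meager A -> meager B ->
  meager (fun x => A x \/ B x).
Proof.
  intros HA HB.
  apply meager_sub with (B := fun x => exists n : nat,
      (fun n => match n with O => A | _ => B end) n x).
  - intros x [H|H]; [exists O|exists 1%nat]; exact H.
  - apply meager_cunion. intros [|n]; auto.
Qed.

Lemma nd_meager (A : R -> Prop) : nowhere_dense A -> meager A.
Proof.
  intros H. exists (fun _ => A). split; auto. intros x Hx. exists O; auto.
Qed.

Lemma meager_empty : meager (fun _ => False).
Proof.
  apply nd_meager. intros U HU Hne. exists U. repeat split; auto.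
Qed.

Lemma baire_of (E O M : R -> Prop) : eopen O -> meager M ->
  (forall x, E x -> ~ O x -> M x) -> (forall x, O x -> ~ E x -> M x) ->
  baire_set E.
Proof.
  intros HO HM H1 H2.
  exists O, (fun x => (E x /\ ~ O x) \/ (O x /\ ~ E x)). split; [|split]; auto.
  - apply meager_sub with (B := M); auto.
    intros x [[a b]|[a b]]; auto.
  - intro x. destruct (classic (E x)); destruct (classic (O x)); tauto.
Qed.

Lemma eopen_inter (U V : R -> Prop) : eopen U -> eopen V -> eopen (fun x => U x /\ V x).
Proof.
  intros HU HV x [Ux Vx].
  destruct (HU x Ux) as [e1 [He1 H1]]. destruct (HV x Vx) as [e2 [He2 H2]].
  exists (Rmin e1 e2). split. apply Rmin_pos; auto.
  intros y Hy. split.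
  apply H1. apply Rlt_le_trans with (1 := Hy); apply Rmin_l.
  apply H2. apply Rlt_le_trans with (1 := Hy); apply Rmin_r.
Qed.

Lemma eopen_ball (p e : R) : eopen (fun y => Rabs (y - p) < e).
Proof.
  intros x Hx. exists (e - Rabs (x - p)). split. lra.
  intros y Hy.
  assert (Rabs (y - p) <= Rabs (y - x) + Rabs (x - p)).
  { replace (y - p) with ((y - x) + (x - p)) by ring. apply Rabs_triang. }
  lra.
Qed.

Section Main.
Variable tau : (R -> Prop) -> Prop.
Hypothesis Htop : is_topology tau.
Hypothesis Hfin : finer_than_euclid tau.
Hypothesis Hopen : forall U, tau U -> nonempty U -> baire_set U /\ ~ meager U.

Lemma tau_union (F : (R -> Prop) -> Prop) : (forall U, F U -> tau U) ->
  tau (fun x => exists U, F U /\ U x).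
Proof. destruct Htop as [_ [_ [H _]]]. apply H. Qed.

Lemma tau_inter U V : tau U -> tau V -> tau (fun x => U x /\ V x).
Proof. destruct Htop as [_ [_ [_ H]]]. apply H. Qed.

Lemma tau_baire U : tau U -> baire_set U.
Proof.
  intros HU. destruct (classic (nonempty U)) as [Hn|Hn].
  - apply (Hopen U HU Hn).
  - exists (fun _ => False), (fun _ => False). split; [|split].
    + intros x [].
    + apply meager_empty.
    + intro x. split; [intro Ux; exfalso; apply Hn; exists x; auto | tauto].
Qed.

Lemma key (W O M I T : R -> Prop) : meager M ->
  (forall x, W x <-> ((O x /\ ~ M x) \/ (M x /\ ~ O x))) ->
  tau T -> nonempty T -> (forall x, T x -> W x /\ I x) ->
  exists x, O x /\ I x.
Proof.
  intros HM HW HT Hne HTW.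
  apply NNPP; intro Hno.
  apply (proj2 (Hopen T HT Hne)).
  apply meager_sub with (B := M); auto.
  intros x Tx. destruct (HTW x Tx) as [Wx Ix].
  apply HW in Wx. destruct Wx as [[Ox _]|[Mx _]]; auto.
  exfalso; apply Hno; exists x; auto.
Qed.

Variable f : R -> R.
Hypothesis Hf : tau_swiatkowski tau f.

Lemma cont_in_ball p e : 0 < e -> exists z, tau_cont_at tau f z /\ Rabs (z - p) < e.
Proof.
  intros He.
  destruct (classic (exists y, Rabs (y - p) < e /\ f y <> f p)) as [[y [Hy Hfy]]|Hno].
  - assert (Hbt : forall z, Rmin p y < z < Rmax p y -> Rabs (z - p) < e).
    { intros z Hz. unfold Rmin, Rmax in Hz.
      destruct (Rle_dec p y); apply Rabs_def2 in Hy; apply Rabs_def1; lra. }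
    destruct (Rlt_or_le (f p) (f y)) as [Hlt|Hle].
    + destruct (Hf p y Hlt) as [z [Hz [Hb _]]]. exists z; split; auto.
    + assert (Hlt : f y < f p) by (destruct Hle; [auto| congruence]).
      destruct (Hf y p Hlt) as [z [Hz [Hb _]]]. exists z; split; auto.
      apply Hbt. rewrite Rmin_comm, Rmax_comm. auto.
  - exists p. split.
    + intros eps Heps. exists (fun y => Rabs (y - p) < e). split; [|split].
      * apply Hfin, eopen_ball.
      * rewrite Rminus_diag, Rabs_R0; auto.
      * intros y Hy. destruct (Req_dec (f y) (f p)) as [E|E].
        -- rewrite E, Rminus_diag, Rabs_R0; auto.
        -- exfalso; apply Hno; exists y; auto.
    + rewrite Rminus_diag, Rabs_R0; auto.
Qed.

Definition An (n : nat) (x : R) : Prop :=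
  ~ exists U, tau U /\ U x /\ forall y, U y -> Rabs (f y - f x) < / INR (S n).

Lemma An_meager n : meager (An n).
Proof.
  set (d := / (2 * INR (S n))).
  assert (Hd : 0 < d).
  { unfold d. apply Rinv_0_lt_compat. assert (0 < INR (S n)) by apply lt_0_INR, Nat.lt_0_succ. lra. }
  assert (Hd2 : d + d = / INR (S n)).
  { unfold d. assert (0 < INR (S n)) by apply lt_0_INR, Nat.lt_0_succ. field. lra. }
  set (F := fun U : R -> Prop => tau U /\ exists z, U z /\ forall y, U y -> Rabs (f y - f z) < d).
  set (W := fun x => exists U, F U /\ U x).
  assert (HWt : tau W) by (apply tau_union; intros U [HU _]; auto).
  destruct (tau_baire W HWt) as [O [M [HO [HM HW]]]].
  assert (HWA : forall x, W x -> ~ An n x).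
  { intros x [U [[HU [z [Uz Hz]]] Ux]] HA. apply HA. exists U. split; [|split]; auto.
    intros y Uy. assert (Hy := Hz y Uy). assert (Hx := Hz x Ux).
    replace (f y - f x) with ((f y - f z) - (f x - f z)) by ring.
    eapply Rle_lt_trans. apply Rabs_triang. rewrite Rabs_Ropp. lra. }
  assert (Hdense : forall U, eopen U -> nonempty U -> exists x, U x /\ O x).
  { intros U HU [p Up]. destruct (HU p Up) as [e [He HeU]].
    destruct (cont_in_ball p e He) as [z [Hz Hzp]].
    destruct (Hz d Hd) as [Uz [HUz [Uzz Hb]]].
    set (T := fun x => Uz x /\ Rabs (x - p) < e).
    assert (HT : tau T) by (apply tau_inter; auto; apply Hfin, eopen_ball).
    destruct (key W O M (fun x => Rabs (x - p) < e) T HM HW HT) as [x [Ox Ix]].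
    - exists z. split; auto.
    - intros x [Ux Ix]. split; auto. exists T. split; [|split; auto].
      split; auto. exists z. split. split; auto. intros y [Uy _]. auto.
    - exists x; auto. }
  apply meager_sub with (B := fun x => ~ O x \/ M x).
  - intros x HA. destruct (classic (O x)) as [Ox|Ox]; auto.
    destruct (classic (M x)) as [Mx|Mx]; auto.
    exfalso. apply (HWA x); auto. apply HW. auto.
  - apply meager_union2; auto. apply nd_meager.
    intros U HU Hne. exists (fun x => U x /\ O x). split; [|split; [|split]].
    + apply eopen_inter; auto.
    + destruct (Hdense U HU Hne) as [x Hx]. exists x; auto.
    + intros x [Ux _]; auto.
    + intros x [_ Ox] H; auto.
Qed.

Lemma nonC_meager : meager (fun x => ~ tau_cont_at tau f x).
Proof.
  apply meager_sub with (B := fun x => exists n, An n x).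
  2: apply meager_cunion, An_meager.
  intros x Hx. apply NNPP; intro Hno. apply Hx. intros eps Heps.
  destruct (archimed (/ eps)) as [Hup _].
  assert (Hpos : 0 <= IZR (up (/ eps))).
  { assert (0 < / eps) by (apply Rinv_0_lt_compat; auto). lra. }
  set (n := Z.to_nat (up (/ eps))).
  assert (Hn : / eps < INR (S n)).
  { rewrite S_INR. unfold n. rewrite INR_IZR_INZ, Z2Nat.id. lra.
    apply le_IZR. auto. }
  assert (Hlt : / INR (S n) < eps).
  { assert (0 < / eps) by (apply Rinv_0_lt_compat; auto).
    rewrite <- (Rinv_inv eps). apply Rinv_lt_contravar; auto. nra. }
  apply NNPP; intro H2. apply Hno. exists n. intros [U [HU [Ux Hb]]].
  apply H2. exists U. split; [|split]; auto.
  intros y Uy. specialize (Hb y Uy). lra.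
Qed.

Lemma main_baire : baire_fun f.
Proof.
  intros V HV.
  set (G := fun U : R -> Prop => tau U /\ forall y, U y -> V (f y)).
  set (W := fun x => exists U, G U /\ U x).
  assert (HWt : tau W) by (apply tau_union; intros U [HU _]; auto).
  destruct (tau_baire W HWt) as [O [M [HO [HM HW]]]].
  assert (HWE : forall x, W x -> V (f x)).
  { intros x [U [[_ HU] Ux]]. auto. }
  apply baire_of with (O := O) (M := fun x => M x \/ ~ tau_cont_at tau f x); auto.
  - apply meager_union2; auto. apply nonC_meager.
  - intros x Ex Ox. destruct (classic (tau_cont_at tau f x)) as [C|C]; auto.
    left. destruct (HV (f x) Ex) as [e [He Hb]].
    destruct (C e He) as [U [HU [Ux HUb]]].
    assert (Wx : W x).
    { exists U. split; auto. split; auto. }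
    apply HW in Wx. tauto.
  - intros x Ox NE. left. destruct (classic (M x)) as [Mx|Mx]; auto.
    exfalso. apply NE, HWE, HW. auto.
Qed.

End Main.

Theorem mainTheorem10 (tau : (R -> Prop) -> Prop)
  (Htop : is_topology tau)
  (Hfin : finer_than_euclid tau)
  (Hopen : forall U, tau U -> nonempty U -> baire_set U /\ ~ meager U)
  (f : R -> R) (Hf : tau_swiatkowski tau f) :
  baire_fun f.
Proof. exact (main_baire tau Htop Hfin Hopen f Hf). Qed.
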